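(* Let $S$ take values in a finite set $\mathcal{S}$ with $P(s)>0$ for all $s$, and let $\mathbf{R}$ take values in a finite set $\mathcal{R}$, with joint distribution $P(s,\mathbf{r})$. Let $Q=(Q(\hat{\mathbf{r}}|\mathbf{r}))_{\mathbf{r},\hat{\mathbf{r}}\in\mathcal{R}}$ be a right stochastic matrix (rows and columns both indexed by $\mathcal{R}$ in the same order) that is idempotent ($Q^2=Q$) and has strictly positive diagonal, and let $\hat{\mathbf{R}}$ be the stochastic code with $P(\hat{\mathbf{r}}|s)=\sum_{\mathbf{r}}P(\mathbf{r}|s)Q(\hat{\mathbf{r}}|\mathbf{r})$. Suppose $g$ is a deterministic function such that $\bar{\mathbf{R}}=g(\hat{\mathbf{R}})$ satisfies $I(S;\bar{\mathbf{R}})=I(S;\hat{\mathbf{R}})$. Then $$\Delta I(\mathbf{R},\hat{\mathbf{R}})=\Delta I(\mathbf{R},\bar{\mathbf{R}})=\Delta I_D=\Delta I_{DL},\quad \Delta I(\mathbf{R},\hat{\mathbf{S}})=\Delta I_{LS},\quad \Delta I(\mathbf{R},\hat{S})=\Delta I_B,\quad \Delta A(\mathbf{R},\hat{\mathbf{R}})=\Delta A_B,$$ with all quantities as defined in the context.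
   Context: $I(S;X)=\sum_{s,x}P(s,x)\log\frac{P(s|x)}{P(s)}$ denotes mutual information, with conventions $0\log0=0$. For codes $X,Y$ taking values in $\mathcal{R}$, an optimal decoder constructed with $Y$ and operated on $X$ maps $x$ to $\arg\max_s P(S=s|Y=x)$ (ties broken by a fixed rule); its accuracy above chance is $A^{X}_{Y}=\sum_s P(S=s,\hat S=s)-\max_s P(s)$, where $\hat S$ is the decoder output when the input is $X$. Likewise the sorted list associated with $Y$ and operated on $X$ maps $x$ to the list of stimuli sorted in decreasing order of $P(S=s|Y=x)$ (fixed tie-breaking rule). Encoding-oriented measures: $\Delta I(\mathbf{R},\hat{\mathbf{R}})=I(S;\mathbf{R})-I(S;\hat{\mathbf{R}})$; $\Delta I(\mathbf{R},\bar{\mathbf{R}})=I(S;\mathbf{R})-I(S;\bar{\mathbf{R}})$; $\Delta I(\mathbf{R},\hat{\mathbf{S}})=I(S;\mathbf{R})-I(S;\hat{\mathbf{S}})$ where $\hat{\mathbf{S}}$ is the sorted list constructed with $\hat{\mathbf{R}}$ and operated on $\hat{\mathbf{R}}$; $\Delta I(\mathbf{R},\hat S)=I(S;\mathbf{R})-I(S;\hat S)$ where $\hat S$ is the optimal decoder output constructed with $\hat{\mathbf{R}}$ and operated on $\hat{\mathbf{R}}$; $\Delta A(\mathbf{R},\hat{\mathbf{R}})=A^{\mathbf{R}}_{\mathbf{R}}-A^{\hat{\mathbf{R}}}_{\hat{\mathbf{R}}}$. Decoding-oriented measures: $\Delta I_D=\sum_{s,\mathbf{r}}P(s,\mathbf{r})\ln\frac{P(s|\mathbf{r})}{P(S=s|\hat{\mathbf{R}}=\mathbf{r})}$;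 $\Delta I_{DL}=\min_{\theta\in\mathbb{R}}\sum_{s,\mathbf{r}}P(s,\mathbf{r})\ln\frac{P(s|\mathbf{r})}{P(s|\hat{\mathbf{R}}=\mathbf{r},\theta)}$, where $P(s|\hat{\mathbf{r}},\theta)$ is proportional (normalized over $s$) to: $P(s)$ if there exist $s',\bar{\mathbf{r}}$ with $P(\mathbf{R}=\bar{\mathbf{r}}|S=s')>P(\hat{\mathbf{R}}=\bar{\mathbf{r}}|S=s')=0$; $0$ if $P(\hat{\mathbf{R}}=\hat{\mathbf{r}}|S=s)=P(\mathbf{R}=\hat{\mathbf{r}}|S=s)=0$ holds for this $s$ but not for all stimuli; and $P(s)P(\hat{\mathbf{R}}=\hat{\mathbf{r}}|S=s)^{\theta}$ otherwise; $\Delta I_{LS}=I(S;\mathbf{R})-I(S;\mathbf{L})$ where $\mathbf{L}$ is the sorted list constructed with $\hat{\mathbf{R}}$ and operated on $\mathbf{R}$; $\Delta I_B=I(S;\mathbf{R})-I(S;\tilde S)$ where $\tilde S$ is the optimal decoder output constructed with $\hat{\mathbf{R}}$ and operated on $\mathbf{R}$; $\Delta A_B=A^{\mathbf{R}}_{\mathbf{R}}-A^{\mathbf{R}}_{\hat{\mathbf{R}}}$ (decoder constructed with $\hat{\mathbf{R}}$, operated on $\mathbf{R}$). *)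

(* Defs.v *)
From HB Require Import structures.
From mathcomp Require Import all_boot all_order all_algebra.
From mathcomp Require Import all_classical all_reals all_analysis.
Set Implicit Arguments. Unset Strict Implicit. Unset Printing Implicit Defensive.
Import Order.TTheory GRing.Theory Num.Theory.
Local Open Scope ring_scope.

(* A "code" is given by its joint distribution with the stimulus:
   J : St -> X -> R, J s x = P(S = s, X = x). *)

Definition margS (R : realType) (St X : finType) (J : St -> X -> R) (s : St) : R :=
  \sum_(x : X) J s x.

Definition margX (R : realType) (St X : finType) (J : St -> X -> R) (x : X) : R :=
  \sum_(s : St) J s x.

(* posterior P(S = s | X = x)  (equal to 0 when P(X = x) = 0) *)
Definition post (R : realType) (St X : finType) (J : St -> X -> R) (x : X) (s : St) : R :=
  J s x / margX J x.

Definition condS (R : realType) (St X : finType) (J : St -> X -> R) (s : St) (x : X) : R :=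
  J s x / margS J s.

Definition MI (R : realType) (St X : finType) (J : St -> X -> R) : R :=
  \sum_(s : St) \sum_(x : X)
     (if J s x == 0 then 0 else J s x * ln (post J x s / margS J s)).

Definition chanJ (R : realType) (St Rsp : finType) (P : St -> Rsp -> R)
  (Q : Rsp -> Rsp -> R) (s : St) (rh : Rsp) : R :=
  \sum_(r : Rsp) P s r * Q r rh.

Definition pushJ (R : realType) (St X B : finType) (J : St -> X -> R) (g : X -> B)
  (s : St) (b : B) : R :=
  \sum_(x : X | g x == b) J s x.

(* Tie-breaking rule: a fixed priority [prio] on stimuli (smaller first);
   remaining ties (equal priority) are broken by the enumeration order of St,
   since [sort] is stable. *)
Definition rank_rel (R : realType) (St X : finType) (prio : St -> nat)
  (Y : St -> X -> R) (x : X) : rel St :=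
  fun a b => (post Y x b < post Y x a) ||
             ((post Y x a == post Y x b) && (prio a <= prio b)%N).

Lemma sorted_list_size (R : realType) (St X : finType) (prio : St -> nat)
  (Y : St -> X -> R) (x : X) :
  size (sort (rank_rel prio Y x) (enum St)) == #|St|.
Proof. by rewrite size_sort cardT. Qed.

Definition sortedL (R : realType) (St X : finType) (prio : St -> nat)
  (Y : St -> X -> R) (x : X) : #|St|.-tuple St :=
  Tuple (sorted_list_size prio Y x).

(* optimal (MAP) decoder constructed with Y, evaluated at x : the top of the
   sorted list, i.e. argmax_s P(S = s | Y = x) with the fixed tie-breaking rule.
   (Always [Some _] since St is nonempty whenever a distribution exists.) *)
Definition decode (R : realType) (St X : finType) (prio : St -> nat)
  (Y : St -> X -> R) (x : X) : option St :=
  ohead (sortedL prio Y x).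

(* joint distribution of (S, sorted list constructed with Y and operated on X) *)
Definition listJ (R : realType) (St X : finType) (prio : St -> nat)
  (Y Xc : St -> X -> R) : St -> #|St|.-tuple St -> R :=
  pushJ Xc (sortedL prio Y).

(* joint distribution of (S, decoder constructed with Y and operated on X) *)
Definition decJ (R : realType) (St X : finType) (prio : St -> nat)
  (Y Xc : St -> X -> R) : St -> option St -> R :=
  pushJ Xc (decode prio Y).

Definition accuracy (R : realType) (St X : finType) (prio : St -> nat)
  (Y Xc : St -> X -> R) : R :=
  \sum_(s : St) decJ prio Y Xc s (Some s) - \big[Num.max/0]_(s : St) margS Xc s.

Definition DeltaID (R : realType) (St Rsp : finType) (P Ph : St -> Rsp -> R) : R :=
  \sum_(s : St) \sum_(r : Rsp)
     (if P s r == 0 then 0 else P s r * ln (post P r s / post Ph r s)).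

Definition DLweight (R : realType) (St Rsp : finType) (P Ph : St -> Rsp -> R)
  (theta : R) (s : St) (rh : Rsp) : R :=
  let zero2 := fun s' => (condS Ph s' rh == 0) && (condS P s' rh == 0) in
  if [exists s', exists rb, (condS Ph s' rb == 0) && (0 < condS P s' rb)]
  then margS P s
  else if zero2 s && ~~ [forall s', zero2 s']
  then 0
  else margS P s * condS Ph s rh `^ theta.

Definition DLpost (R : realType) (St Rsp : finType) (P Ph : St -> Rsp -> R)
  (theta : R) (s : St) (rh : Rsp) : R :=
  DLweight P Ph theta s rh / \sum_(s' : St) DLweight P Ph theta s' rh.

(* the function of theta minimized in Delta I_DL *)
Definition DLobj (R : realType) (St Rsp : finType) (P Ph : St -> Rsp -> R)
  (theta : R) : R :=
  \sum_(s : St) \sum_(r : Rsp)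
     (if P s r == 0 then 0 else P s r * ln (post P r s / DLpost P Ph theta s r)).

(* Main.v *)
Require Import Defs.
From HB Require Import structures.
From mathcomp Require Import all_boot all_order all_algebra.
From mathcomp Require Import all_classical all_reals all_analysis.
From mathcomp Require Import lra.
Import Order.TTheory GRing.Theory Num.Theory.
Local Open Scope ring_scope.

Section S.
Variable R : realType.

Lemma exmax (T : finType) (f : T -> R) (t : T) : exists x0, forall x, f x <= f x0.
Proof.
case: (@arg_maxP _ _ T t xpredT f isT) => x0 _ H; exists x0 => x; exact: H.
Qed.

Lemma ln_le_sub1 (x : R) : 0 < x -> ln x <= x - 1.
Proof. move=> x0; have := expR_ge1Dx (ln x); rewrite lnK ?posrE //; lra. Qed.

Lemma sum_ge_term (T : finType) (f : T -> R) (t : T) :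
  (forall x, 0 <= f x) -> f t <= \sum_x f x.
Proof.
move=> H; rewrite (bigD1 t) //= lerDl; apply: sumr_ge0 => x _; exact: H.
Qed.

Variable Rsp : finType.
Variable Q : Rsp -> Rsp -> R.
Hypothesis HQ0 : forall r rh, 0 <= Q r rh.
Hypothesis HQ1 : forall r, \sum_(rh : Rsp) Q r rh = 1.
Hypothesis HQidem : forall r r2, \sum_(r1 : Rsp) Q r r1 * Q r1 r2 = Q r r2.
Hypothesis HQdiag : forall r, 0 < Q r r.

Lemma Qtrans a b c : 0 < Q a b -> 0 < Q b c -> 0 < Q a c.
Proof.
move=> h1 h2; rewrite -HQidem.
have := sum_ge_term _ (fun r1 => Q a r1 * Q r1 c) b (fun x => mulr_ge0 (HQ0 _ _) (HQ0 _ _)).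
have := mulr_gt0 h1 h2. move=> /= h3 h4. exact: lt_le_trans h3 h4.
Qed.

Lemma Qsym a b : 0 < Q a b -> 0 < Q b a.
Proof.
move=> hab; rewrite lt_def HQ0 andbT; apply/negP => /eqP hba.
pose A x := 0 < Q b x.
have HA1 : forall x, A x -> \sum_(z | A z) Q x z = 1.
  move=> x Ax; rewrite -(HQ1 x) [RHS](bigID A) /= [X in _ = _ + X]big1 ?addr0 // => z nAz.
  apply/eqP; rewrite eq_le HQ0 andbT leNgt; apply/negP => Hxz.
  by move/negP: nAz; apply; apply: Qtrans Hxz.
have E1 : \sum_(z | A z) Q a z = \sum_x Q a x * \sum_(z | A z) Q x z.
  under eq_bigr => z _ do rewrite -HQidem.
  rewrite exchange_big /=; apply: eq_bigr => x _; by rewrite mulr_sumr.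
rewrite [RHS](bigID A) /= in E1.
have E2 : \sum_(x | A x) Q a x * \sum_(z | A z) Q x z = \sum_(x | A x) Q a x.
  by apply: eq_bigr => x Ax; rewrite HA1 // mulr1.
rewrite E2 -[X in X = _]addr0 in E1; move/addrI: E1 => /esym /eqP.
rewrite psumr_eq0; last by move=> x _; apply: mulr_ge0 => //; apply: sumr_ge0.
move=> /allP /(_ a (mem_index_enum a)).
have nAa : ~~ A a by rewrite /A hba ltxx.
rewrite nAa /= mulf_eq0 => /orP [|]; first by rewrite gt_eqF // HQdiag.
have Ab : A b by rewrite /A HQdiag.
rewrite gt_eqF //; apply: lt_le_trans hab _.
rewrite (bigD1 b) //= lerDl; apply: sumr_ge0 => x _; exact: HQ0.
Qed.

Lemma Qconst x z : 0 < Q x z -> Q x z = Q z z.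
Proof.
move=> hxz.
have [x0 Hm] := exmax _ (fun x => Q x z) z.
have key : forall w, 0 < Q x0 w -> Q w z = Q x0 z.
  have S0 : \sum_w Q x0 w * (Q x0 z - Q w z) = 0.
    under eq_bigr => w _ do rewrite mulrBr.
    by rewrite sumrB -mulr_suml HQ1 mul1r HQidem subrr.
  move/eqP: S0; rewrite psumr_eq0; last first.
    by move=> w _; apply: mulr_ge0 => //; rewrite subr_ge0 Hm.
  move=> /allP H w hw; have := H w (mem_index_enum w).
  by rewrite mulf_eq0 gt_eqF //= subr_eq0 => /eqP.
have hx0z : 0 < Q x0 z by apply: lt_le_trans (HQdiag z) (Hm z).
rewrite key; last by exact: (Qtrans _ _ _ hx0z (Qsym _ _ hxz)).
by rewrite key // HQdiag.
Qed.


Lemma sum_gt (T : finType) (f : T -> R) (t : T) :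
  (forall x, 0 <= f x) -> 0 < f t -> 0 < \sum_x f x.
Proof. move=> H1 H2; exact: lt_le_trans H2 (sum_ge_term _ f t H1). Qed.

Lemma if0 (x y : R) : (if x == 0 then 0 else x * y) = x * y.
Proof. by case: eqP => [->|]; rewrite ?mul0r. Qed.

Lemma cancel_l (l u v : R) : l != 0 -> (l * u) / (l * v) = u / v.
Proof. by move=> hl; rewrite invfM mulrACA mulfV // mul1r. Qed.

Variable St : finType.
Variable P : St -> Rsp -> R.
Hypothesis HP0 : forall s r, 0 <= P s r.
Hypothesis HP1 : \sum_(s : St) \sum_(r : Rsp) P s r = 1.
Hypothesis HPs : forall s, 0 < margS P s.

Local Notation Ph := (chanJ P Q).

Lemma Ph_ge0 s r : 0 <= Ph s r.
Proof. by rewrite /chanJ sumr_ge0 // => x _; rewrite mulr_ge0. Qed.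

Lemma Ph_pos s r : 0 < P s r -> 0 < Ph s r.
Proof.
move=> h; rewrite /chanJ; apply: (sum_gt _ (fun x => P s x * Q x r) r).
  by move=> x; rewrite mulr_ge0.
exact: mulr_gt0.
Qed.

Lemma margS_Ph s : margS Ph s = margS P s.
Proof.
rewrite /margS /chanJ exchange_big /=; apply: eq_bigr => r _.
by rewrite -mulr_sumr HQ1 mulr1.
Qed.

Lemma L_inv (L : Rsp -> R) s : (forall r rh, 0 < Q r rh -> L rh = L r) ->
  \sum_rh Ph s rh * L rh = \sum_r P s r * L r.
Proof.
move=> HL; rewrite /chanJ.
under eq_bigr => rh _ do rewrite mulr_suml.
rewrite exchange_big /=; apply: eq_bigr => r _.
transitivity (\sum_rh P s r * (Q r rh * L r)).
  apply: eq_bigr => rh _; rewrite -mulrA; congr (_ * _).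
  have := HQ0 r rh; rewrite le_eqVlt => /orP [/eqP <-|/HL ->]; by rewrite ?mul0r.
by rewrite -mulr_sumr -mulr_suml HQ1 mul1r.
Qed.

Lemma Ph_form s x : Ph s x = Q x x * \sum_r P s r * ((0 < Q r x)%R)%:R.
Proof.
rewrite /chanJ mulr_sumr; apply: eq_bigr => r _.
have := HQ0 r x; rewrite le_eqVlt => /orP [/eqP <-|h]; first by rewrite ltxx !mulr0.
by rewrite h mulr1 (Qconst _ _ h) mulrC.
Qed.

Lemma K_eq a b s : 0 < Q a b ->
  \sum_r P s r * ((0 < Q r a)%R)%:R = \sum_r P s r * ((0 < Q r b)%R)%:R.
Proof.
move=> hab; apply: eq_bigr => r _.
suff -> : (0 < Q r a) = (0 < Q r b) by [].
apply/idP/idP => h; first exact: Qtrans _ _ _ h hab.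
exact: Qtrans _ _ _ h (Qsym _ _ hab).
Qed.

Lemma lam_neq0 a b : Q a a / Q b b != 0.
Proof. by rewrite mulf_neq0 // ?invr_eq0 gt_eqF // HQdiag. Qed.

Lemma lam_gt0 a b : 0 < Q a a / Q b b.
Proof. by rewrite divr_gt0 // HQdiag. Qed.

Lemma Ph_scale a b s : 0 < Q a b -> Ph s a = Q a a / Q b b * Ph s b.
Proof.
move=> hab; rewrite !Ph_form (K_eq _ _ s hab) mulrA divfK // gt_eqF // HQdiag.
Qed.

Lemma post_inv a b s : 0 < Q a b -> post Ph a s = post Ph b s.
Proof.
move=> hab; rewrite /post /margX.
under eq_bigr => s' _ do rewrite (Ph_scale _ _ s' hab).
by rewrite -mulr_sumr (Ph_scale _ _ _ hab) cancel_l // lam_neq0.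
Qed.

Lemma post_pos s r : 0 < P s r -> 0 < post Ph r s.
Proof.
move=> h; rewrite /post divr_gt0 //; first exact: Ph_pos _ _ h.
rewrite /margX; apply: (sum_gt _ (fun s' => Ph s' r) s); last exact: Ph_pos _ _ h.
by move=> x; apply: Ph_ge0.
Qed.

Lemma postP_pos s r : 0 < P s r -> 0 < post P r s.
Proof.
move=> h; rewrite /post divr_gt0 //.
by rewrite /margX; apply: (sum_gt _ (fun s' => P s' r) s).
Qed.

Lemma MI_Ph : MI Ph = \sum_s \sum_r P s r * ln (post Ph r s / margS P s).
Proof.
rewrite /MI; apply: eq_bigr => s _.
under eq_bigr => r _ do rewrite if0 margS_Ph.
apply: (L_inv (fun r => ln (post Ph r s / margS P s)) s) => r rh h.
by rewrite (post_inv _ _ s (Qsym _ _ h)).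
Qed.

Lemma part2 : MI P - MI Ph = DeltaID P Ph.
Proof.
rewrite MI_Ph /MI /DeltaID -sumrB; apply: eq_bigr => s _.
rewrite -sumrB; apply: eq_bigr => r _; rewrite !if0 -mulrBr.
have := HP0 s r; rewrite le_eqVlt => /orP [/eqP <-|h]; first by rewrite !mul0r.
congr (_ * _).
have ha := postP_pos _ _ h; have hb := post_pos _ _ h; have hc := HPs s.
move: ha hb hc; move: (post P r s) (post Ph r s) (margS P s) => x y z hx hy hz.
rewrite !ln_div ?posrE //; lra.
Qed.


Lemma ex_false :
  [exists s', exists rb, (condS Ph s' rb == 0) && (0 < condS P s' rb)] = false.
Proof.
apply/negbTE/existsP => -[s' /existsP [rb /andP [/eqP h1 h2]]].
have hP : 0 < P s' rb.
  by move: h2; rewrite /condS pmulr_lgt0 // invr_gt0 HPs.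
move/eqP: h1; rewrite /condS mulf_eq0 invr_eq0 margS_Ph (gt_eqF (HPs _)) orbF.
by rewrite (gt_eqF (Ph_pos _ _ hP)).
Qed.

Lemma Z_eq s x :
  ((condS Ph s x == 0) && (condS P s x == 0)) = (Ph s x == 0).
Proof.
rewrite /condS !mulf_eq0 !invr_eq0 margS_Ph !(gt_eqF (HPs s)) !orbF.
apply/andP/idP => [[]//|h]; split=> //.
have := HP0 s x; rewrite le_eqVlt => /orP [/eqP<-//|/(Ph_pos _ _)].
by rewrite lt_def h.
Qed.

Lemma DLweight_eq th s rh : DLweight P Ph th s rh =
  if (Ph s rh == 0) && ~~ [forall s', Ph s' rh == 0] then 0
  else margS P s * condS Ph s rh `^ th.
Proof.
rewrite /DLweight /= ex_false Z_eq.
congr (if _ && ~~ _ then _ else _).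
apply: eq_forallb => s'; exact: Z_eq.
Qed.

Lemma DLweight_ge0 th s rh : 0 <= DLweight P Ph th s rh.
Proof.
rewrite DLweight_eq; case: ifP => // _.
by rewrite mulr_ge0 ?powR_ge0 // ltW.
Qed.

Lemma condPh_ge0 s r : 0 <= condS Ph s r.
Proof. by rewrite /condS divr_ge0 ?Ph_ge0 // margS_Ph ltW. Qed.

Lemma w_inv th a b s : 0 < Q a b ->
  DLweight P Ph th s a = (Q a a / Q b b) `^ th * DLweight P Ph th s b.
Proof.
move=> hab; rewrite !DLweight_eq.
have E : forall s', (Ph s' a == 0) = (Ph s' b == 0).
  by move=> s'; rewrite (Ph_scale _ _ s' hab) mulf_eq0 (negbTE (lam_neq0 a b)).
rewrite E (eq_forallb E); case: ifP => _; first by rewrite mulr0.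
have -> : condS Ph s a = Q a a / Q b b * condS Ph s b.
  by rewrite /condS (Ph_scale _ _ s hab) mulrA.
by rewrite (powRM _ (ltW (lam_gt0 a b)) (condPh_ge0 s b)) mulrCA.
Qed.

Lemma DLpost_inv th a b s : 0 < Q a b ->
  DLpost P Ph th s a = DLpost P Ph th s b.
Proof.
move=> hab; rewrite /DLpost (w_inv th a b s hab).
under eq_bigr => s' _ do rewrite (w_inv th a b s' hab).
by rewrite -mulr_sumr cancel_l // gt_eqF // powR_gt0 // lam_gt0.
Qed.

Lemma DLpost_ge0 th s r : 0 <= DLpost P Ph th s r.
Proof.
by rewrite /DLpost divr_ge0 ?DLweight_ge0 // sumr_ge0 // => x _; apply: DLweight_ge0.
Qed.

Lemma DLpost_pos th s r : 0 < P s r -> 0 < DLpost P Ph th s r.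
Proof.
move=> h.
have hw : 0 < DLweight P Ph th s r.
  rewrite DLweight_eq (gt_eqF (Ph_pos _ _ h)) /=.
  rewrite mulr_gt0 // powR_gt0 // /condS divr_gt0 ?Ph_pos //.
  by rewrite margS_Ph.
rewrite /DLpost divr_gt0 //.
apply: (sum_gt _ (fun s' => DLweight P Ph th s' r) s) => // x.
exact: DLweight_ge0.
Qed.

Lemma DLsum_le1 th r : \sum_s DLpost P Ph th s r <= 1.
Proof.
rewrite /DLpost -mulr_suml.
case: (eqVneq (\sum_s' DLweight P Ph th s' r) 0) => [->|h].
  by rewrite invr0 mulr0 ler01.
by rewrite mulfV.
Qed.

Lemma sumPh : \sum_s \sum_r Ph s r = 1.
Proof.
rewrite -HP1; apply: eq_bigr => s _.
have := margS_Ph s; by rewrite /margS.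
Qed.

Lemma DL_ge th : DeltaID P Ph <= DLobj P Ph th.
Proof.
pose q := fun s r => DLpost P Ph th s r.
pose b := fun s r => post Ph r s.
have step1 : \sum_s \sum_r P s r * (1 - q s r / b s r) <= DLobj P Ph th - DeltaID P Ph.
  rewrite /DLobj /DeltaID -sumrB; apply: ler_sum => s _.
  rewrite -sumrB; apply: ler_sum => r _; rewrite !if0 -mulrBr.
  have := HP0 s r; rewrite le_eqVlt => /orP [/eqP <-|h]; first by rewrite !mul0r.
  apply: ler_wpM2l; first exact: ltW.
  have ha := postP_pos _ _ h; have hb := post_pos _ _ h.
  have hq := DLpost_pos th _ _ h.
  rewrite /q /b.
  move: ha hb hq; move: (post P r s) (post Ph r s) (DLpost P Ph th s r) => x y z hx hy hz.
  have := ln_le_sub1 _ (divr_gt0 hz hy).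
  rewrite !ln_div ?posrE //; lra.
have step2 : \sum_s \sum_r P s r * (q s r / b s r) <= 1.
  have E : forall s, \sum_r P s r * (q s r / b s r) = \sum_r Ph s r * (q s r / b s r).
    move=> s; symmetry.
    apply: (L_inv (fun r => q s r / b s r) s) => r rh hr.
    by rewrite /q /b (DLpost_inv th _ _ s (Qsym _ _ hr)) (post_inv _ _ s (Qsym _ _ hr)).
  under eq_bigr => s _ do rewrite E.
  apply: (@le_trans _ _ (\sum_s \sum_r margX Ph r * q s r)).
    apply: ler_sum => s _; apply: ler_sum => r _.
    have hm : 0 <= margX Ph r by apply: sumr_ge0 => x _; exact: Ph_ge0.
    have := Ph_ge0 s r; rewrite le_eqVlt => /orP [/eqP <-|hp].
      by rewrite mul0r mulr_ge0 // DLpost_ge0.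
    have hm' : margX Ph r != 0.
      rewrite gt_eqF //; apply: (sum_gt _ (fun s' => Ph s' r) s) => // x.
      exact: Ph_ge0.
    rewrite /b /post invf_div mulrCA [Ph s r * (_ / _)]mulrCA mulfV ?gt_eqF //.
    by rewrite mulr1 mulrC.
  rewrite exchange_big /=.
  apply: (@le_trans _ _ (\sum_r margX Ph r)).
    apply: ler_sum => r _; rewrite -mulr_sumr.
    rewrite -[X in _ <= X]mulr1; apply: ler_wpM2l; last exact: DLsum_le1.
    by apply: sumr_ge0 => x _; exact: Ph_ge0.
  by rewrite /margX exchange_big /= sumPh.
have H3 : \sum_s \sum_r P s r * (1 - q s r / b s r) =
   1 - \sum_s \sum_r P s r * (q s r / b s r).
  rewrite -[in RHS]HP1 -sumrB; apply: eq_bigr => s _; rewrite -sumrB.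
  by apply: eq_bigr => r _; rewrite mulrBr mulr1.
rewrite H3 in step1; rewrite -subr_ge0; apply: le_trans step1; lra.
Qed.

Lemma w1 s r : DLweight P Ph 1 s r = Ph s r.
Proof.
rewrite DLweight_eq; case: ifP => [/andP [/eqP -> _]//| _].
rewrite powRr1 ?condPh_ge0 // /condS margS_Ph mulrCA divff ?mulr1 //.
by rewrite gt_eqF.
Qed.

Lemma DL1 : DLobj P Ph 1 = DeltaID P Ph.
Proof.
rewrite /DLobj /DeltaID; apply: eq_bigr => s _; apply: eq_bigr => r _.
rewrite /DLpost w1; under eq_bigr => s' _ do rewrite w1.
by [].
Qed.

Lemma push_eq (T : finType) (h : Rsp -> T) :
  (forall a b, 0 < Q a b -> h a = h b) -> pushJ Ph h = pushJ P h.
Proof.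
move=> Hh; apply: funext => s; apply: funext => t; rewrite /pushJ.
transitivity (\sum_x Ph s x * ((h x == t)%:R : R)).
  by rewrite [LHS]big_mkcond; apply: eq_bigr => x _; case: eqP; rewrite ?mulr1 ?mulr0.
transitivity (\sum_x P s x * ((h x == t)%:R : R)); last first.
  by rewrite [RHS]big_mkcond; apply: eq_bigr => x _; case: eqP; rewrite ?mulr1 ?mulr0.
have HL : forall r rh, 0 < Q r rh -> ((h rh == t)%:R : R) = (h r == t)%:R.
  by move=> r rh hr; rewrite (Hh _ _ (Qsym _ _ hr)).
exact: (L_inv (fun x => ((h x == t)%:R : R)) s HL).
Qed.

Lemma sorted_inv prio a b : 0 < Q a b -> sortedL prio Ph a = sortedL prio Ph b.
Proof.
move=> hab; apply: val_inj => /=.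
have -> : rank_rel prio Ph a = rank_rel prio Ph b; last by [].
rewrite /rank_rel; apply: funext => u; apply: funext => v.
by rewrite !(post_inv _ _ _ hab).
Qed.


Lemma main (B : finType) (g : Rsp -> B) (prio : St -> nat)
  (Hg : MI (pushJ (chanJ P Q) g) = MI (chanJ P Q)) :
  let Ph := chanJ P Q in
  let Pb := pushJ Ph g in
  (MI P - MI Ph = MI P - MI Pb)
  /\ (MI P - MI Pb = DeltaID P Ph)
  /\ ((forall theta : R, DeltaID P Ph <= DLobj P Ph theta)
      /\ (exists theta : R, DLobj P Ph theta = DeltaID P Ph))
  /\ (MI P - MI (listJ prio Ph Ph) = MI P - MI (listJ prio Ph P))
  /\ (MI P - MI (decJ prio Ph Ph) = MI P - MI (decJ prio Ph P))
  /\ (accuracy prio P P - accuracy prio Ph Ph = accuracy prio P P - accuracy prio Ph P).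
Proof using HQ0 HQ1 HQidem HQdiag HP0 HP1 HPs.
move=> Ph0 Pb0; rewrite /Pb0 /Ph0.
have Hdec : decJ prio Ph Ph = decJ prio Ph P.
  rewrite /decJ; apply: push_eq => a b hab; by rewrite /Defs.decode (sorted_inv prio _ _ hab).
split; first by rewrite Hg.
split; first by rewrite Hg part2.
split; first by split; [exact: DL_ge | exists 1; exact: DL1].
split.
  rewrite /listJ push_eq //; move=> a b hab; exact: sorted_inv.
split; first by rewrite Hdec.
have HmS : margS Ph = margS P by apply: funext => s; exact: margS_Ph.
by rewrite /accuracy Hdec HmS.
Qed.

End S.

Theorem theorem6 (R : realType) (St Rsp B : finType)
  (P : St -> Rsp -> R) (Q : Rsp -> Rsp -> R) (g : Rsp -> B) (prio : St -> nat)
  (HP0 : forall s r, 0 <= P s r)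
  (HP1 : \sum_(s : St) \sum_(r : Rsp) P s r = 1)
  (HPs : forall s, 0 < margS P s)
  (HQ0 : forall r rh, 0 <= Q r rh)
  (HQ1 : forall r, \sum_(rh : Rsp) Q r rh = 1)
  (HQidem : forall r r2, \sum_(r1 : Rsp) Q r r1 * Q r1 r2 = Q r r2)
  (HQdiag : forall r, 0 < Q r r)
  (Hg : MI (pushJ (chanJ P Q) g) = MI (chanJ P Q)) :
  let Ph := chanJ P Q in
  let Pb := pushJ Ph g in
  (MI P - MI Ph = MI P - MI Pb)
  /\ (MI P - MI Pb = DeltaID P Ph)
  /\ ((forall theta : R, DeltaID P Ph <= DLobj P Ph theta)
      /\ (exists theta : R, DLobj P Ph theta = DeltaID P Ph))
  /\ (MI P - MI (listJ prio Ph Ph) = MI P - MI (listJ prio Ph P))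
  /\ (MI P - MI (decJ prio Ph Ph) = MI P - MI (decJ prio Ph P))
  /\ (accuracy prio P P - accuracy prio Ph Ph = accuracy prio P P - accuracy prio Ph P).
Proof.
exact: (@main R Rsp Q HQ0 HQ1 HQidem HQdiag St P HP0 HP1 HPs B g prio Hg).
Qed.
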